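(* Let $G$ be a finite simple undirected graph whose VC-dimension is $d$. Then for every simple coalition game $\mathcal G$ over $G$, $\dfrac{\kappa(\mathcal G)}{\rho(\mathcal G)}\le d+1$.
   Context: Coalition game over $G=(V,E)$: a valuation $v:2^V\to\mathbb Z_{\ge 0}$ with $v(\emptyset)=0$, $v(S)=0$ whenever $G[S]$ is disconnected, and $v$ not identically zero; it is simple if $v(S)\in\{0,1\}$ for all $S$. $\kappa(\mathcal G)=\min\{\sum_{i\in V}x_i: x\in\mathbb Z_{\ge0}^V,\ \sum_{i\in S}x_i\ge v(S)\ \forall S\subseteq V\}$; $\rho(\mathcal G)$ is the maximum of $\sum_{S\in\mathcal P}v(S)$ over families $\mathcal P$ of pairwise disjoint subsets of $V$. A set $X\subseteq V$ is shattered by a family $\mathcal R$ of subsets of $V$ if for every $Y\subseteq X$ there is $R\in\mathcal R$ with $R\cap X=Y$; the VC-dimension of $\mathcal R$ is the maximum size of a shattered set. The VC-dimension of the graph $G$ is the VC-dimension of the family of all nonempty $S\subseteq V$ such that $G[S]$ is connected. *)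

(* Defs.v *)
From HB Require Import structures.
From mathcomp Require Import all_boot all_order all_algebra.
Set Implicit Arguments. Unset Strict Implicit. Unset Printing Implicit Defensive.
Import Order.TTheory GRing.Theory Num.Theory.

Definition simple_graph (T : finType) (e : rel T) : Prop :=
  symmetric e /\ irreflexive e.

Definition induced (T : finType) (e : rel T) (S : {set T}) : rel T :=
  fun x y => [&& e x y, x \in S & y \in S].

Definition connected_in (T : finType) (e : rel T) (S : {set T}) : bool :=
  [forall x in S, forall y in S, connect (induced e S) x y].

Definition conn_family (T : finType) (e : rel T) : {set {set T}} :=
  [set S : {set T} | (S != set0) && connected_in e S].

Definition shattered (T : finType) (R : {set {set T}}) (X : {set T}) : bool :=
  [forall Y : {set T}, (Y \subset X) ==> [exists A in R, A :&: X == Y]].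

Definition vc_dim (T : finType) (R : {set {set T}}) : nat :=
  \max_(X : {set T} | shattered R X) #|X|.

Definition graph_vc_dim (T : finType) (e : rel T) : nat :=
  vc_dim (conn_family e).

Definition coalition_game (T : finType) (e : rel T) (v : {set T} -> nat) : Prop :=
  [/\ v set0 = 0%N,
      (forall S : {set T}, ~~ connected_in e S -> v S = 0%N)
    & exists S : {set T}, v S <> 0%N].

Definition simple_game (T : finType) (v : {set T} -> nat) : Prop :=
  forall S : {set T}, (v S <= 1)%N.

Definition feasible (T : finType) (v : {set T} -> nat) (x : T -> nat) : Prop :=
  forall S : {set T}, (v S <= \sum_(i in S) x i)%N.

Definition is_kappa (T : finType) (v : {set T} -> nat) (k : nat) : Prop :=
  (exists2 x : T -> nat, feasible v x & \sum_(i : T) x i = k) /\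
  (forall x : T -> nat, feasible v x -> (k <= \sum_(i : T) x i)%N).

Definition pairwise_disjoint (T : finType) (P : {set {set T}}) : bool :=
  [forall A in P, forall B in P, (A != B) ==> [disjoint A & B]].

Definition rho (T : finType) (v : {set T} -> nat) : nat :=
  \max_(P : {set {set T}} | pairwise_disjoint P) \sum_(S in P) v S.

(* Main.v *)
Require Import Defs.
From HB Require Import structures.
From mathcomp Require Import all_boot all_order all_algebra.
From mathcomp Require Import zify.
Import Order.TTheory GRing.Theory Num.Theory.
Set Implicit Arguments. Unset Strict Implicit.

Lemma conn_sub (T : finType) (e : rel T) (S A : {set T}) x y :
  connected_in e S -> S \subset A -> x \in S -> y \in S ->
  connect (induced e A) x y.
Proof.
move=> /forall_inP /(_ x) H sSA xS yS.
move: (H xS) => /forall_inP /(_ y yS).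
apply: connect_sub => u w /and3P [euw uS wS].
apply: connect1; apply/and3P; split => //; exact: (subsetP sSA).
Qed.

Lemma union_conn (T : finType) (e : rel T) (C : {set T}) (I : finType)
  (Y : {set I}) (F : I -> {set T}) :
  connected_in e C ->
  (forall i, i \in Y -> connected_in e (F i) /\ ~~ [disjoint F i & C]) ->
  connected_in e (C :|: \bigcup_(i in Y) F i).
Proof.
move=> hC hF; set A := C :|: _.
have sCA : C \subset A by apply: subsetUl.
have sFA : forall i, i \in Y -> F i \subset A.
  by move=> i iY; apply: subset_trans (subsetUr _ _); apply: bigcup_sup.
have key : forall x, x \in A -> exists2 c, c \in C &
    connect (induced e A) x c && connect (induced e A) c x.
  move=> x /setUP [xC|/bigcupP [i iY xF]].
    by exists x => //; rewrite connect0.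
  have [ci di] := hF i iY.
  move: di; rewrite -setI_eq0 => /set0Pn [z /setIP [zF zC]].
  exists z => //; apply/andP; split; exact: (conn_sub ci (sFA i iY)).
apply/forall_inP => x xA; apply/forall_inP => y yA.
have [c cC /andP [xc _]] := key x xA.
have [c' c'C /andP [_ c'y]] := key y yA.
apply: connect_trans xc _; apply: connect_trans _ c'y.
exact: (conn_sub hC sCA).
Qed.

Theorem theorem4p2 (T : finType) (e : rel T) (d : nat)
  (hG : simple_graph e) (hd : graph_vc_dim e = d)
  (v : {set T} -> nat) (hv : coalition_game e v) (hs : simple_game v)
  (k : nat) (hk : is_kappa v k) :
  ((k%:R / (rho v)%:R : rat) <= (d.+1)%:R)%R.
Proof.
case: hv => v0 vc _.
have winC : forall S, 0 < v S -> connected_in e S.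
  move=> S vS; apply/negPn/negP => /vc; rewrite lt0n in vS; move/eqP: vS.
  by [].
have winN : forall S, 0 < v S -> S != set0.
  by move=> S vS; apply/eqP => S0; move: vS; rewrite S0 v0.
pose hit (H : {set T}) :=
  [forall S : {set T}, (0 < v S) ==> ~~ [disjoint S & H]].
have hitT : hit setT.
  apply/forallP => S; apply/implyP => /winN /set0Pn [z zS].
  by rewrite -setI_eq0 setIT; apply/set0Pn; exists z.
have [H minH _] := minset_exists hitT.
have [hitH minH'] := minsetP minH.
have hitP : forall S, 0 < v S -> exists2 z, z \in S & z \in H.
  move=> S vS; move/forallP: hitH => /(_ S); rewrite vS /= -setI_eq0.
  by case/set0Pn => z /setIP [? ?]; exists z.
have priv : forall h, h \in H -> exists S, (0 < v S) && (S :&: H == [set h]).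
  move=> h hH.
  have : ~~ hit (H :\ h).
    apply/negP => hh; have := minH' _ hh (subsetDl _ _).
    by move/setP/(_ h); rewrite !inE eqxx hH.
  case/forallPn => S; rewrite negb_imply negbK => /andP [vS dS].
  exists S; rewrite vS /=; apply/eqP/setP => z; rewrite !inE.
  apply/andP/eqP => [[zS zH]|->].
    apply/eqP/negPn/negP => zh.
    by move: (disjointFr dS zS); rewrite !inE zh zH.
  have [w wS wH] := hitP S vS; split => //.
  have : w == h.
    apply/negPn/negP => wh.
    by move: (disjointFr dS wS); rewrite !inE wh wH.
  by move/eqP <-.
pose f h := odflt set0 [pick S | (0 < v S) && (S :&: H == [set h])].
have fP : forall h, h \in H -> 0 < v (f h) /\ f h :&: H = [set h].
  move=> h hH; rewrite /f; case: pickP => [S /andP [vS /eqP ->]|none] //=.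
  by have [S] := priv h hH; rewrite none.
have fin : forall h, h \in H -> h \in f h.
  by move=> h hH; have [_ /setP/(_ h)] := fP h hH; rewrite !inE eqxx hH => /andP [].
have fH : forall h a, h \in H -> a \in H -> a \in f h -> a = h.
  move=> h a hH aH afh; have [_ /setP/(_ a)] := fP h hH.
  by rewrite in_setI in_set1 afh aH => /esym /eqP.
pose pd (Q : {set T}) := (Q \subset H) &&
  [forall a in Q, forall b in Q, (a != b) ==> [disjoint f a & f b]].
have pd0 : pd set0 by rewrite /pd sub0set; apply/forall_inP => a; rewrite inE.
have [Q maxQ _] := maxset_exists pd0.
have [/andP [sQH pdQ] maxQ'] := maxsetP maxQ.
have gex : forall h, h \in H -> [exists q in Q, ~~ [disjoint f h & f q]].
  move=> h hH; case: (boolP [exists q in Q, _]) => // /exists_inPn nd.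
  have nd' : forall q, q \in Q -> [disjoint f h & f q].
    by move=> q /nd /negPn.
  have pdh : pd (h |: Q).
    rewrite /pd subUset sub1set hH sQH /=.
    apply/forall_inP => a; rewrite in_setU1 => /orP [/eqP ->|aQ];
      apply/forall_inP => b; rewrite in_setU1 => /orP [/eqP ->|bQ];
      apply/implyP => ab.
    - by rewrite eqxx in ab.
    - exact: nd'.
    - by rewrite disjoint_sym; apply: nd'.
    - by move/forall_inP: pdQ => /(_ a aQ) /forall_inP /(_ b bQ) /implyP; apply.
  have hQ : h \in Q by rewrite -(maxQ' _ pdh (subsetUr _ _)) !inE eqxx.
  by move: (disjointFr (nd' h hQ) (fin h hH)); rewrite fin.
pose g h := odflt h [pick q in Q | ~~ [disjoint f h & f q]].
have gP : forall h, h \in H -> g h \in Q /\ ~~ [disjoint f h & f (g h)].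
  move=> h hH; rewrite /g; case: pickP => [q /andP [qQ dq]|none] //=.
  by have /exists_inP [q qQ] := gex h hH; move: (none q); rewrite qQ /= => ->.
have fib : forall q, q \in Q -> #|[set h in H | g h == q]| <= d.+1.
  move=> q qQ; set F := [set h in H | g h == q].
  have qH : q \in H by apply: (subsetP sQH).
  set X := F :\ q.
  have XH : forall z, z \in X -> [/\ z \in H, z != q & g z = q].
    by move=> z; rewrite !inE => /and3P [-> -> /eqP ->].
  have shX : shattered (conn_family e) X.
    apply/forallP => Y; apply/implyP => sYX; apply/exists_inP.
    exists (f q :|: \bigcup_(h in Y) f h).
      rewrite inE; apply/andP; split.
        by apply/set0Pn; exists q; rewrite inE fin.
      apply: union_conn; first by apply: winC; case: (fP q qH).
      move=> i iY; have [iH _ giq] := XH i (subsetP sYX i iY).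
      split; first by apply: winC; case: (fP i iH).
      by rewrite -giq; case: (gP i iH).
    apply/eqP/setP => z; rewrite inE.
    apply/idP/idP => [/andP [/setUP [zq|/bigcupP [h hY zh]] zX]|zY].
    - have [zH zq' _] := XH z zX.
      by move: zq'; rewrite (fH q z qH zH zq) eqxx.
    - have [zH _ _] := XH z zX; have [hH _ _] := XH h (subsetP sYX h hY).
      by rewrite (fH h z hH zH zh).
    - have zX := subsetP sYX z zY; have [zH _ _] := XH z zX.
      rewrite zX andbT; apply/setUP; right; apply/bigcupP; exists z => //.
      exact: fin.
  have : #|X| <= d.
    rewrite -hd /graph_vc_dim /vc_dim.
    exact: (@leq_bigmax_cond _ (fun X => shattered (conn_family e) X) (fun X => #|X|) X).
  rewrite (cardsD1 q F) => hX; exact: leq_add (leq_b1 _) hX.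
have cardH : #|H| <= #|Q| * d.+1.
  rewrite -sum1_card (partition_big g (fun q => q \in Q)); last first.
    by move=> i iH; case: (gP i iH).
  rewrite -sum_nat_const; apply: leq_sum => q qQ.
  have -> : \sum_(i in H | g i == q) 1 = #|[set h in H | g h == q]|.
    by rewrite -sum1_card; apply: eq_bigl => i; rewrite !inE.
  exact: fib.
have rhoQ : #|Q| <= rho v.
  have pdP : pairwise_disjoint (f @: Q).
    apply/forall_inP => A /imsetP [a aQ ->]; apply/forall_inP => B /imsetP [b bQ ->].
    apply/implyP => neq; have ab : a != b by apply: contraNneq neq => ->.
    by move/forall_inP: pdQ => /(_ a aQ) /forall_inP /(_ b bQ) /implyP; apply.
  have inj : {in Q &, injective f}.
    move=> a b aQ bQ fab; have aH := subsetP sQH a aQ; have bH := subsetP sQH b bQ.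
    by apply: (fH b a bH aH); rewrite -fab fin.
  apply: leq_trans (@leq_bigmax_cond _ (fun P => pairwise_disjoint P)
     (fun P => \sum_(S in P) v S) _ pdP).
  rewrite -(card_in_imset inj) -sum1_card leq_eqVlt; apply/orP; left.
  apply/eqP; apply: eq_bigr => S /imsetP [a aQ ->].
  have [va _] := fP a (subsetP sQH a aQ); have := hs (f a); lia.
have kH : k <= #|H|.
  have feas : feasible v (fun i => (i \in H : nat)).
    move=> S; case vS: (v S) => [|n] //.
    have n0 : n = 0 by have := hs S; rewrite vS; lia.
    rewrite n0; have [z zS zH] := hitP S ltac:(by rewrite vS).
    by rewrite (bigD1 z) //= zH.
  have := hk.2 _ feas.
  have -> : \sum_i (i \in H : nat) = #|H|.
    by rewrite -sum1_card [RHS]big_mkcond /=; apply: eq_bigr => i _; case: (i \in H).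
  by [].
have kfin : k <= rho v * d.+1.
  apply: leq_trans kH (leq_trans cardH _); exact: leq_mul.
have [r0|rpos] := posnP (rho v).
  by rewrite r0 invr0 mulr0 ler0n.
rewrite ler_pdivrMr ?ltr0n // -natrM ler_nat.
by rewrite mulnC.
Qed.
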